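(* Let $n\geq 3$, $0\leq k\leq n$, $0<\delta<\frac13$, $r>0$. Let $\mathbf{X}_k$ be a metric space, $\hat q\in\mathbf X_k$, $(M^n,g)$ a Riemannian manifold, $q\in M^n$, and suppose $\Phi:B_{10r}(0,\hat q)\to B_{10r}(q)$ is a pointed $(\delta r)$-Gromov-Hausdorff approximation, where $B_{10r}(0,\hat q)\subset\mathbb{R}^k\times\mathbf{X}_k$. Then for any $\hat q_1^+,\hat q_1^-\in B_r(\hat q)\subset\mathbf{X}_k$ there exists $\hat q_0\in B_{3r}(\hat q)$ such that $$\Big|d(\hat q_0,\hat q_1^+)-\tfrac12 d(\hat q_1^+,\hat q_1^-)\Big|\leq 8\sqrt\delta\, r\quad\text{and}\quad\Big|d(\hat q_0,\hat q_1^-)-\tfrac12 d(\hat q_1^+,\hat q_1^-)\Big|\leq 8\sqrt\delta\, r,$$ and moreover, if $\sqrt\delta\, r\leq\frac{d(\hat q_1^+,\hat q_1^-)}{100}$, then, with $q_1=\Phi(0,\hat q_0)$, $p_{k+1}^+=\Phi(0,\hat q_1^+)$, $p_{k+1}^-=\Phi(0,\hat q_1^-)$, one has $$d(q_1,p_{k+1}^+)+d(q_1,p_{k+1}^-)-d(p_{k+1}^+,p_{k+1}^-)\leq 16\sqrt\delta\, r\quad\text{and}\quad\min\{d(q_1,p_{k+1}^+),d(q_1,p_{k+1}^-)\}\geq\tfrac14 d(\hat q_1^+,\hat q_1^-).$$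
   Context: $B_\rho(x)$ is the open ball. $\mathbb{R}^k\times\mathbf{X}_k$ has the product metric $\sqrt{|a-b|^2+d_{\mathbf X_k}(x,y)^2}$. A pointed $\eta$-Gromov-Hausdorff approximation $f:(\mathbf{X},x_0)\to(\mathbf{Y},y_0)$ satisfies $f(x_0)=y_0$, every point of $\mathbf Y$ lies within $\eta$ of $f(\mathbf X)$, and $|d(f(x_1),f(x_2))-d(x_1,x_2)|<\eta$ for all $x_1,x_2$; base points here are $(0,\hat q)$ and $q$. *)

(* Defs.v *)
From mathcomp Require Import all_boot all_order all_algebra.
From mathcomp Require Import reals.
Set Implicit Arguments. Unset Strict Implicit. Unset Printing Implicit Defensive.
Import Order.TTheory GRing.Theory Num.Theory.
Local Open Scope ring_scope.

Definition is_metric (R : realType) (T : Type) (d : T -> T -> R) : Prop :=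
  [/\ (forall x y, 0 <= d x y),
      (forall x y, d x y = 0 <-> x = y),
      (forall x y, d x y = d y x) &
      (forall x y z, d x z <= d x y + d y z)].

(* Approximate midpoint property: characterizes length (intrinsic) metric
   spaces; the distance of a connected Riemannian manifold has it. *)
Definition approx_midpoints (R : realType) (T : Type) (d : T -> T -> R) : Prop :=
  forall x y (eps : R), 0 < eps ->
    exists z, d x z <= d x y / 2 + eps /\ d z y <= d x y / 2 + eps.

Definition prod_dist (R : realType) (k : nat) (X : Type) (dX : X -> X -> R)
  (p1 p2 : 'rV[R]_k * X) : R :=
  Num.sqrt (\sum_(i < k) (p1.1 0 i - p2.1 0 i) ^+ 2 + (dX p1.2 p2.2) ^+ 2).

Definition in_ball (R : realType) (T : Type) (d : T -> T -> R) (c : T) (rho : R)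
  (x : T) : Prop := d c x < rho.

(* Pointed eta-Gromov-Hausdorff approximation f : (B_rho(x0), x0) -> (B_rho(y0), y0),
   where f is given as a total function whose values outside B_rho(x0) are irrelevant. *)
Definition pointed_GH_approx (R : realType) (A B : Type)
  (dA : A -> A -> R) (dB : B -> B -> R) (x0 : A) (y0 : B) (rho eta : R)
  (f : A -> B) : Prop :=
  [/\ f x0 = y0,
      (forall x, in_ball dA x0 rho x -> in_ball dB y0 rho (f x)),
      (forall y, in_ball dB y0 rho y ->
          exists2 x, in_ball dA x0 rho x & dB y (f x) < eta) &
      (forall x1 x2, in_ball dA x0 rho x1 -> in_ball dA x0 rho x2 ->
          `|dB (f x1) (f x2) - dA x1 x2| < eta)].

(* Main.v *)
Require Import Defs.
From mathcomp Require Import all_boot all_order all_algebra.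
From mathcomp Require Import reals.
From mathcomp Require Import lra.
Import Order.TTheory GRing.Theory Num.Theory.
Local Open Scope ring_scope.

Lemma pd00 (R : realType) (k : nat) (X : Type) (dX : X -> X -> R) x y :
  0 <= dX x y -> prod_dist dX (0 : 'rV[R]_k, x) (0, y) = dX x y.
Proof.
move=> h; rewrite /prod_dist /= big1 ?add0r ?sqrtr_sqr ?ger0_norm //.
by move=> i _; rewrite subrr expr2 mulr0.
Qed.

Lemma pd_ge (R : realType) (k : nat) (X : Type) (dX : X -> X -> R)
  (p1 p2 : 'rV[R]_k * X) :
  0 <= dX p1.2 p2.2 -> dX p1.2 p2.2 <= prod_dist dX p1 p2.
Proof.
move=> h; rewrite /prod_dist -{1}(ger0_norm h) -sqrtr_sqr ler_sqrt.
  by rewrite lerDr sumr_ge0 // => i _; rewrite sqr_ge0.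
by rewrite addr_ge0 ?sqr_ge0 // sumr_ge0 // => i _; rewrite sqr_ge0.
Qed.

Theorem lemma2p8 (R : realType) (n k : nat) (delta r : R)
  (X : Type) (dX : X -> X -> R) (qhat : X)
  (M : Type) (dM : M -> M -> R) (q : M)
  (Phi : 'rV[R]_k * X -> M) :
  (3 <= n)%N -> (k <= n)%N ->
  0 < delta -> delta < 3^-1 -> 0 < r ->
  is_metric dX -> is_metric dM -> approx_midpoints dM ->
  pointed_GH_approx (prod_dist dX) dM (0, qhat) q (10 * r) (delta * r) Phi ->
  forall q1p q1m : X, dX qhat q1p < r -> dX qhat q1m < r ->
  exists q0 : X,
    [/\ dX qhat q0 < 3 * r,
        `|dX q0 q1p - dX q1p q1m / 2| <= 8 * Num.sqrt delta * r,
        `|dX q0 q1m - dX q1p q1m / 2| <= 8 * Num.sqrt delta * r &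
        (Num.sqrt delta * r <= dX q1p q1m / 100 ->
          let q1 := Phi (0, q0) in
          let pp := Phi (0, q1p) in
          let pm := Phi (0, q1m) in
          dM q1 pp + dM q1 pm - dM pp pm <= 16 * Num.sqrt delta * r /\
          Num.min (dM q1 pp) (dM q1 pm) >= dX q1p q1m / 4)].
Proof.
move=> _ _ d0 d3 r0 [dX0 dXe dXs dXt] [dM0 dMe dMs dMt] mid [P0 Pin Psur Pdist].
move=> q1p q1m hp hm.
set s := Num.sqrt delta.
have s0 : 0 < s by rewrite sqrtr_gt0.
have s2 : s ^+ 2 = delta by rewrite sqr_sqrtr // ltW.
have s1 : s < 1 by nra.
have ds : delta <= s by nra.
have dsr : delta * r <= s * r by rewrite ler_pM2r.
have Dle : dX q1p q1m < 2 * r.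
  have := dXt q1p qhat q1m; rewrite (dXs q1p qhat); lra.
have D0 := dX0 q1p q1m.
have dpp : dX q1p q1p = 0 by apply/dXe.
have [big|small] := lerP 1 (64 * delta).
  have s8 : 1 <= 8 * s by nra.
  have s8r : r <= 8 * s * r by nra.
  exists q1p; split.
  - lra.
  - rewrite dpp ler_norml; apply/andP; split; lra.
  - rewrite ler_norml; apply/andP; split; lra.
  - move=> h; exfalso; nra.
have GH x1 x2 : in_ball (prod_dist dX) (0 : 'rV[R]_k, qhat) (10 * r) x1 ->
    in_ball (prod_dist dX) (0 : 'rV[R]_k, qhat) (10 * r) x2 ->
    dM (Phi x1) (Phi x2) < prod_dist dX x1 x2 + delta * r /\
    prod_dist dX x1 x2 < dM (Phi x1) (Phi x2) + delta * r.
  move=> h1 h2; have := Pdist x1 x2 h1 h2; rewrite ltr_norml => /andP[a b].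
  split; lra.
have inb x : dX qhat x < 10 * r -> in_ball (prod_dist dX) (0 : 'rV[R]_k, qhat) (10 * r) (0, x).
  by move=> h; rewrite /in_ball pd00.
have bq : in_ball (prod_dist dX) (0 : 'rV[R]_k, qhat) (10 * r) (0 : 'rV[R]_k, qhat).
  apply: (inb qhat); have := proj2 (dXe qhat qhat) erefl; lra.
have bp : in_ball (prod_dist dX) (0 : 'rV[R]_k, qhat) (10 * r) (0, q1p) by apply: inb; lra.
have bm : in_ball (prod_dist dX) (0 : 'rV[R]_k, qhat) (10 * r) (0, q1m) by apply: inb; lra.
set pp := Phi (0, q1p); set pm := Phi (0, q1m).
have [qpp _] := GH _ _ bq bp; rewrite pd00 // P0 in qpp.
have [ppm1 ppm2] := GH _ _ bp bm; rewrite pd00 // in ppm1 ppm2.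
have dr0 : 0 < delta * r by rewrite mulr_gt0.
have drr : 64 * (delta * r) < r by nra.
have [z [z1 z2]] := mid pp pm (delta * r / 2) ltac:(lra).
have zb : in_ball dM q (10 * r) z.
  rewrite /in_ball; have := dMt q pp z; lra.
have [[a q0] xb hz] := Psur z zb.
have [qx1 qx2] := GH _ _ bq xb; rewrite P0 in qx1 qx2.
have hq0 : dX qhat q0 < 3 * r.
  have := @pd_ge _ _ _ dX (0 : 'rV[R]_k, qhat) (a, q0) (dX0 _ _) => /= h.
  have := dMt q z (Phi (a, q0)) => h2.
  have := dMt q pp z; lra.
have [xp1 xp2] := GH _ _ xb bp.
have [xm1 xm2] := GH _ _ xb bm.
have up : dX q0 q1p < dX q1p q1m / 2 + 3 * (delta * r).
  have := @pd_ge _ _ _ dX (a, q0) (0, q1p) (dX0 _ _) => /= h.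
  have := dMt (Phi (a, q0)) z pp; rewrite (dMs _ z) (dMs z pp) => h2.
  lra.
have um : dX q0 q1m < dX q1p q1m / 2 + 3 * (delta * r).
  have := @pd_ge _ _ _ dX (a, q0) (0, q1m) (dX0 _ _) => /= h.
  have := dMt (Phi (a, q0)) z pm; rewrite (dMs _ z) => h2.
  lra.
have tr := dXt q1p q0 q1m; rewrite (dXs q1p q0) in tr.
have b0 : in_ball (prod_dist dX) (0 : 'rV[R]_k, qhat) (10 * r) (0, q0) by apply: inb; lra.
exists q0; split.
- exact: hq0.
- rewrite ler_norml; apply/andP; split; lra.
- rewrite ler_norml; apply/andP; split; lra.
move=> hD /=.
have [c1 c2] := GH _ _ b0 bp; rewrite pd00 // in c1 c2.
have [c3 c4] := GH _ _ b0 bm; rewrite pd00 // in c3 c4.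
have Dd : 100 * (delta * r) <= dX q1p q1m by lra.
split; first lra.
rewrite le_min; apply/andP; split; lra.
Qed.
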